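(* Let $A$ be a complex vector space of countable dimension, and let $\mu\colon A^*\to A$ and $\nu\colon A^*\to A$ be linear maps such that $\alpha(\mu(\beta))=\beta(\nu(\alpha))$ for all $\alpha,\beta\in A^*$. Then $\mathrm{im}\,\mu$ and $\mathrm{im}\,\nu$ are finite-dimensional and $\dim\mathrm{im}\,\mu=\dim\mathrm{im}\,\nu$. *)

(* Defs.v *)
From mathcomp Require Import all_boot all_algebra complex reals.
Set Implicit Arguments. Unset Strict Implicit. Unset Printing Implicit Defensive.
Import GRing.Theory.
Local Open Scope ring_scope.

Section LinAlg.
Variables (K : fieldType) (V : lmodType K).

Definition lin_indep (I : eqType) (e : I -> V) : Prop :=
  forall (s : seq I) (c : I -> K), uniq s ->
    \sum_(i <- s) c i *: e i = 0 -> forall i, i \in s -> c i = 0.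

Definition spans (I : Type) (e : I -> V) : Prop :=
  forall v : V, exists (s : seq I) (c : I -> K), v = \sum_(i <- s) c i *: e i.

Definition is_basis (I : eqType) (e : I -> V) : Prop := lin_indep e /\ spans e.

Definition countable_dim : Prop :=
  exists (I : countType) (e : I -> V), is_basis e.

Definition has_dim (S : V -> Prop) (n : nat) : Prop :=
  exists b : 'I_n -> V,
    (forall i, S (b i)) /\ lin_indep b /\
    (forall v, S v -> exists c : 'I_n -> K, v = \sum_(i < n) c i *: b i).

Definition algdual := {scalar V}.

(* A map f : V^* -> W is linear (for the pointwise vector space structure on V^* ). *)
Definition dual_linear (W : lmodType K) (f : algdual -> W) : Prop :=
  forall (a : K) (alpha beta gamma : algdual),
    (forall x, gamma x = a * alpha x + beta x) ->
    f gamma = a *: f alpha + f beta.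

Definition img (T W : Type) (f : T -> W) : W -> Prop := fun w => exists t, f t = w.

End LinAlg.

(* Main.v *)
Require Import Defs.
From mathcomp Require Import all_boot all_algebra complex reals.
From HB Require Import structures.
From Stdlib Require Import ClassicalEpsilon Classical.
Set Implicit Arguments. Unset Strict Implicit. Unset Printing Implicit Defensive.
Import GRing.Theory.
Local Open Scope ring_scope.

Section Sums.
Variables (M : nmodType) (I : eqType).

Lemma sum_sub (s u : seq I) (F : I -> M) : uniq s -> uniq u -> {subset s <= u} ->
  (forall k, k \notin s -> F k = 0) -> \sum_(k <- u) F k = \sum_(k <- s) F k.
Proof.
move=> us uu su F0; rewrite (bigID (mem s)) /= [X in _ + X]big1 ?addr0; last first.
  by move=> k /F0.
rewrite -big_filter; apply: perm_big; apply: uniq_perm; first exact: filter_uniq.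
  done.
by move=> k; rewrite mem_filter; case: (boolP (k \in s)) => //= ks; rewrite (su _ ks).
Qed.

Lemma sum_same (s1 s2 : seq I) (F : I -> M) : uniq s1 -> uniq s2 ->
  (forall k, k \notin s1 -> F k = 0) -> (forall k, k \notin s2 -> F k = 0) ->
  \sum_(k <- s1) F k = \sum_(k <- s2) F k.
Proof.
move=> u1 u2 F1 F2.
rewrite -(@sum_sub s1 (undup (s1 ++ s2))) ?undup_uniq //; last first.
  by move=> k ks; rewrite mem_undup mem_cat ks.
rewrite (@sum_sub s2 (undup (s1 ++ s2))) ?undup_uniq //.
by move=> k ks; rewrite mem_undup mem_cat ks orbT.
Qed.

Lemma sum_one (s : seq I) (j : I) (F : I -> M) : uniq s -> j \in s ->
  (forall k, k != j -> F k = 0) -> \sum_(k <- s) F k = F j.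
Proof.
move=> us js F0; rewrite (@sum_same s [:: j]) ?big_seq1 //.
  all: move=> k kj; apply: F0; apply: contraNneq kj => ->; rewrite ?inE //.
Qed.

End Sums.

Section Basis.
Variables (K : fieldType) (V : lmodType K) (I : eqType) (e : I -> V).
Hypothesis he : is_basis e.

Definition ext (s : seq I) (c : I -> K) k := if k \in s then c k else 0.

Lemma ext_sum s c u : uniq s -> uniq u -> {subset s <= u} ->
  \sum_(k <- u) ext s c k *: e k = \sum_(k <- s) c k *: e k.
Proof.
move=> us uu su; rewrite (@sum_sub _ _ s) //; last first.
  by move=> k /negbTE ks; rewrite /ext ks scale0r.
by apply: eq_big_seq => k ks; rewrite /ext ks.
Qed.

Lemma spans_uniq v : exists p : seq I * (I -> K),
  uniq p.1 /\ v = \sum_(i <- p.1) p.2 i *: e i.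
Proof.
case: he => _ /(_ v) [s [c vE]]; rewrite {v}vE.
elim: s => [|x s IH].
  by exists ([::], fun _ => 0); rewrite !big_nil.
rewrite big_cons; case: IH => [[s' c'] /= [us' ->]].
case: (boolP (x \in s')) => xs.
  exists (s', fun i => if i == x then c x + c' x else c' i) => /=; split => //.
  rewrite (bigD1_seq x) //= [in RHS](bigD1_seq x) //= eqxx scalerDl -addrA; congr (_ + _).
  congr (_ + _); apply: eq_bigr => i /negbTE ->; done.
exists (x :: s', fun i => if i == x then c x else c' i) => /=; split.
  by rewrite /= xs.
rewrite big_cons eqxx; congr (_ + _); apply: eq_big_seq => i iS.
by case: eqP => // ix; move: xs; rewrite -ix iS.
Qed.

Lemma coeff_unique s c s' c' : uniq s -> uniq s' ->
  \sum_(i <- s) c i *: e i = \sum_(i <- s') c' i *: e i ->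
  forall k, ext s c k = ext s' c' k.
Proof.
move=> us us' eqs k.
set u := undup (s ++ s').
have uu : uniq u by rewrite undup_uniq.
have su : {subset s <= u} by move=> i iS; rewrite mem_undup mem_cat iS.
have su' : {subset s' <= u} by move=> i iS; rewrite mem_undup mem_cat iS orbT.
have : \sum_(i <- u) (ext s c i - ext s' c' i) *: e i = 0.
  under eq_bigr do rewrite scalerBl.
  by rewrite sumrB !ext_sum // eqs subrr.
case: he => li _ /li => /(_ uu) H.
case: (boolP (k \in u)) => ku.
  by apply/eqP; rewrite -subr_eq0; apply/eqP; apply: H.
rewrite /ext; case: (boolP (k \in s)) => ks; first by rewrite (su _ ks) in ku.
by case: (boolP (k \in s')) => ks' //; rewrite (su' _ ks') in ku.
Qed.

Definition rep v := proj1_sig (constructive_indefinite_description _ (spans_uniq v)).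
Lemma repP v : uniq (rep v).1 /\ v = \sum_(i <- (rep v).1) (rep v).2 i *: e i.
Proof. exact: (proj2_sig (constructive_indefinite_description _ (spans_uniq v))). Qed.

Definition supp v := (rep v).1.
Definition coord k v := ext (supp v) (rep v).2 k.

Lemma supp_uniq v : uniq (supp v).
Proof. by case: (repP v). Qed.

Lemma coord_spec v s c : uniq s -> v = \sum_(i <- s) c i *: e i ->
  forall k, coord k v = ext s c k.
Proof.
move=> us vE k; rewrite /coord; apply: coeff_unique => //; first exact: supp_uniq.
by case: (repP v) => _ <-.
Qed.

Lemma coord_supp k v : coord k v != 0 -> k \in supp v.
Proof. by rewrite /coord /ext; case: ifP => //; rewrite eqxx. Qed.

Lemma vec_sum v u : uniq u -> (forall k, coord k v != 0 -> k \in u) ->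
  v = \sum_(k <- u) coord k v *: e k.
Proof.
move=> uu Hu; case: (repP v) => us vE.
rewrite (@sum_same _ _ u (supp v)) //; last 2 first.
- by move=> k ku; apply/eqP; rewrite scaler_eq0; apply/orP; left;
    apply: contraNT ku => /Hu.
- by move=> k ku; apply/eqP; rewrite scaler_eq0; apply/orP; left;
    apply: contraNT ku => /coord_supp.
by rewrite /coord ext_sum.
Qed.

Lemma coord_ext v w : (forall k, coord k v = coord k w) -> v = w.
Proof.
move=> H; set u := undup (supp v ++ supp w).
have uu : uniq u by rewrite undup_uniq.
have hv : v = \sum_(k <- u) coord k v *: e k.
  by apply: vec_sum => // k /coord_supp ks; rewrite mem_undup mem_cat ks.
have hw : w = \sum_(k <- u) coord k w *: e k.
  by apply: vec_sum => // k /coord_supp ks; rewrite mem_undup mem_cat ks orbT.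
rewrite [LHS]hv [RHS]hw.
by apply: eq_bigr => k _; rewrite H.
Qed.

Lemma coordD k a v w : coord k (a *: v + w) = a * coord k v + coord k w.
Proof.
set u := undup (supp v ++ supp w).
have uu : uniq u by rewrite undup_uniq.
have E : a *: v + w = \sum_(i <- u) (a * coord i v + coord i w) *: e i.
  have hv : v = \sum_(k <- u) coord k v *: e k.
    by apply: vec_sum => // i /coord_supp ks; rewrite mem_undup mem_cat ks.
  have hw : w = \sum_(k <- u) coord k w *: e k.
    by apply: vec_sum => // i /coord_supp ks; rewrite mem_undup mem_cat ks orbT.
  rewrite [in LHS]hv [in X in _ + X]hw.
  by rewrite scaler_sumr -big_split /=; apply: eq_bigr => i _; rewrite scalerDl scalerA.
rewrite (coord_spec uu E) /ext; case: ifP => // /negbT ku.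
have cz : forall x, (x = v \/ x = w) -> coord k x = 0.
  move=> x Hx; apply/eqP; apply: contraNT ku => /coord_supp kx.
  by rewrite mem_undup mem_cat; case: Hx => <-; rewrite kx ?orbT.
by rewrite (cz v) ?(cz w) ?mulr0 ?addr0; auto.
Qed.

Lemma coord_e k i : coord k (e i) = (k == i)%:R.
Proof.
have E : e i = \sum_(j <- [:: i]) (1 : K) *: e j by rewrite big_seq1 scale1r.
have := @coord_spec (e i) [:: i] (fun=> 1) erefl E k.
by rewrite /ext inE; case: eqP.
Qed.

Lemma coord0 k : coord k 0 = 0.
Proof.
have := coordD k 1 0 0; rewrite scale1r addr0 mul1r.
by move/(congr1 (fun x => x - coord k 0)); rewrite subrr addrK.
Qed.


Definition phi (b : I -> K) (v : V) : K := \sum_(k <- supp v) b k * coord k v.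

Lemma coord_nsupp k v : k \notin supp v -> coord k v = 0.
Proof. by move=> ks; apply/eqP; apply: contraNT ks => /coord_supp. Qed.

Lemma phi_sum b v u : uniq u -> (forall k, coord k v != 0 -> k \in u) ->
  phi b v = \sum_(k <- u) b k * coord k v.
Proof.
move=> uu Hu; rewrite /phi; apply: sum_same => //; first exact: supp_uniq.
  by move=> k /coord_nsupp ->; rewrite mulr0.
move=> k ku; rewrite (_ : coord k v = 0) ?mulr0 //.
by apply/eqP; apply: contraNT ku => /Hu.
Qed.

Lemma phi_lin b : linear_for *%R (phi b).
Proof.
move=> a v w /=.
set u := undup (supp v ++ supp w ++ supp (a *: v + w)).
have uu : uniq u by rewrite undup_uniq.
rewrite (@phi_sum b v u) // ?(@phi_sum b w u) // ?(@phi_sum b (a *: v + w) u) //.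
- rewrite mulr_sumr -big_split /=; apply: eq_bigr => k _.
  by rewrite coordD mulrDr mulrCA.
- by move=> k /coord_supp ks; rewrite mem_undup !mem_cat ks ?orbT.
- by move=> k /coord_supp ks; rewrite mem_undup !mem_cat ks ?orbT.
- by move=> k /coord_supp ks; rewrite mem_undup !mem_cat ks ?orbT.
Qed.

HB.instance Definition _ b := GRing.isLinear.Build K V K *%R (phi b) (phi_lin b).

Definition phiS b : {scalar V} := phi b.

Lemma phiSE b v : phiS b v = phi b v.
Proof. by []. Qed.

Lemma phi_e b i : phi b (e i) = b i.
Proof.
rewrite (@phi_sum b (e i) [:: i]) // ?big_seq1 ?coord_e ?eqxx ?mulr1 //.
by move=> k; rewrite coord_e inE; case: (k == i) => //=; rewrite eqxx.
Qed.

Definition delta j := fun k : I => ((k == j)%:R : K).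

Lemma phi_delta j v : phi (delta j) v = coord j v.
Proof.
rewrite /phi; case: (boolP (j \in supp v)) => js.
  rewrite (@sum_one _ _ _ j) ?supp_uniq // /delta ?eqxx ?mul1r //.
  by move=> k /negbTE ->; rewrite mul0r.
rewrite big1_seq ?coord_nsupp //.
by move=> k [] /andP [_ ks]; rewrite /delta; case: eqP => [kj|]; [rewrite -kj ks in js | rewrite mul0r].
Qed.

End Basis.
Section MxDim.
Variables (K : fieldType) (V : lmodType K).

Lemma mx_comb r q (y : 'rV[K]_r) (Mx : 'M[K]_(r, q)) (f : 'I_q -> V) :
  \sum_i y 0 i *: (\sum_l Mx i l *: f l) = \sum_l (y *m Mx) 0 l *: f l.
Proof.
under eq_bigr do rewrite scaler_sumr.
rewrite exchange_big /=; apply: eq_bigr => l _.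
rewrite mxE scaler_suml; apply: eq_bigr => i _; by rewrite scalerA.
Qed.

Lemma has_dim_mx p q (H : 'M[K]_(p, q)) (f : 'I_q -> V) :
  (forall c : 'I_q -> K, \sum_l c l *: f l = 0 -> forall l, c l = 0) ->
  has_dim (fun v => exists x : 'rV_p, v = \sum_l (x *m H) 0 l *: f l) (\rank H).
Proof.
move=> indf.
set RB := row_base H.
have RBH : (RB :=: H)%MS by exact: eq_row_base.
exists (fun i => \sum_l RB i l *: f l); split; last split.
- move=> i /=.
  have : (row i RB <= H)%MS by rewrite -RBH row_sub.
  case/submxP => x Ex; exists x; rewrite -Ex; apply: eq_bigr => l _; by rewrite [row _ _ 0 l]mxE.
- move=> s c us Hs i is_.
  set d := \row_i (if i \in s then c i else 0) : 'rV[K]_(\rank H).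
  have E : \sum_i0 d 0 i0 *: (\sum_l RB i0 l *: f l) = 0.
    have E1 := @sum_sub _ _ s (index_enum 'I_(\rank H)) (fun i0 => d 0 i0 *: (\sum_l RB i0 l *: f l)) us.
    rewrite E1; first (apply: (etrans _ Hs); apply: eq_big_seq => j js; by rewrite [d 0 j]mxE js).
    + exact: index_enum_uniq.
    + by move=> j _; rewrite mem_index_enum.
    + by move=> j /negbTE js; rewrite mxE js scale0r.
  rewrite mx_comb in E.
  have dRB : d *m RB = 0.
    by apply/matrixP => a l; rewrite ord1 [RHS]mxE; exact: (indf _ E l).
  have d0 : d = 0.
    have /row_freeP [B EB] : row_free RB by exact: row_base_free.
    by rewrite -(mulmx1 d) -EB mulmxA dRB mul0mx.
  have := congr1 (fun M : 'rV[K]_(\rank H) => M 0 i) d0.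
  by rewrite !mxE is_.
- move=> v /= [x ->].
  have : (x *m H <= RB)%MS by rewrite RBH submxMl.
  case/submxP => y Ey; exists (fun i => y 0 i).
  by rewrite Ey mx_comb.
Qed.

End MxDim.
Section Main.
Variables (K : fieldType) (V : lmodType K) (I : eqType) (e : I -> V).
Hypothesis he : is_basis e.
Variables (mu nu : {scalar V} -> V).
Hypothesis hpair : forall alpha beta : {scalar V}, alpha (mu beta) = beta (nu alpha).

Local Notation coord := (coord he).
Local Notation supp := (supp he).
Definition cf j := phiS he (delta K j).
Definition rr j := nu (cf j).
Definition cc k := mu (cf k).

Lemma cfE j v : cf j v = coord j v.
Proof. by rewrite /cf phiSE phi_delta. Qed.

Lemma coord_mu j (beta : {scalar V}) : coord j (mu beta) = beta (rr j).
Proof. by rewrite -cfE hpair. Qed.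

Lemma coord_rr k j : coord k (rr j) = coord j (cc k).
Proof. by rewrite /rr /cc -!cfE hpair. Qed.

Lemma nz_coord v : v != 0 -> exists k, coord k v != 0.
Proof.
move=> vn; apply: NNPP => H; move/eqP: vn; apply; apply: (coord_ext (he:=he)) => k.
rewrite coord0; apply/eqP; apply: NNPP => H'; apply: H; exists k; exact/negP.
Qed.

Definition Tch (S : seq I) := flatten [seq supp (cc k) | k <- S].

Lemma touch S k j : coord k (rr j) != 0 -> k \in S -> j \in Tch S.
Proof.
rewrite coord_rr => /coord_supp jk kS; apply/flatten_mapP; by exists k.
Qed.

Section Contra.
Hypothesis Hinf : forall S : seq I, exists j, j \notin S /\ rr j != 0.

Definition pickj S := proj1_sig (constructive_indefinite_description _ (Hinf (Tch S))).
Lemma pickjP S : pickj S \notin Tch S /\ rr (pickj S) != 0.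
Proof. exact: (proj2_sig (constructive_indefinite_description _ (Hinf (Tch S)))). Qed.

Lemma exk S : exists k, coord k (rr (pickj S)) != 0.
Proof. by apply: nz_coord; case: (pickjP S). Qed.

Definition pickk S := proj1_sig (constructive_indefinite_description _ (exk S)).
Lemma pickkP S : coord (pickk S) (rr (pickj S)) != 0.
Proof. exact: (proj2_sig (constructive_indefinite_description _ (exk S))). Qed.

Fixpoint Sq n := if n is n'.+1 then Sq n' ++ supp (rr (pickj (Sq n'))) else [::].
Definition jj n := pickj (Sq n).
Definition kk n := pickk (Sq n).

Lemma Sq_mono m n : (m <= n)%N -> {subset Sq m <= Sq n}.
Proof.
move=> mn; rewrite -(subnK mn); elim: (n - m)%N => [|d IH] x xS; first by rewrite add0n.
by rewrite addSn /= mem_cat IH.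
Qed.

Lemma F1 m n : (m < n)%N -> {subset supp (rr (jj m)) <= Sq n}.
Proof. by move=> mn x xs; apply: (Sq_mono mn); rewrite /= mem_cat xs orbT. Qed.

Lemma F2 n k : k \in Sq n -> coord k (rr (jj n)) = 0.
Proof.
move=> kS; apply/eqP; apply: NNPP => /negP H.
by case: (pickjP (Sq n)) => /negP Hn _; apply: Hn; apply: touch H kS.
Qed.

Lemma F3 n : kk n \notin Sq n.
Proof. by apply/negP => /F2; apply/eqP; apply: pickkP. Qed.

Lemma F4 n : kk n \in supp (rr (jj n)).
Proof. exact/coord_supp/pickkP. Qed.

Lemma F5 m n : m != n -> coord (kk n) (rr (jj m)) = 0.
Proof.
case: (ltngtP m n) => // mn _.
  apply/eqP; apply: NNPP => /negP /coord_supp H.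
  by have := F3 n; rewrite (F1 mn H).
by apply: F2; apply: (F1 mn); apply: F4.
Qed.

Lemma jj_inj : injective jj.
Proof.
move=> m n E; apply/eqP; apply: NNPP => /negP mn.
have := F5 mn; rewrite E => H; have := pickkP (Sq n); rewrite -/(jj n) -/(kk n) H.
by rewrite eqxx.
Qed.

Definition bK k : K := if excluded_middle_informative (exists n, k = kk n) then 1 else 0.

Lemma F7 n : phi he bK (rr (jj n)) = coord (kk n) (rr (jj n)).
Proof.
rewrite /phi (@sum_one _ _ _ (kk n)) ?supp_uniq ?F4 //.
  rewrite /bK; destruct (excluded_middle_informative _) as [e1|H]; first by rewrite mul1r.
  by exfalso; apply: H; exists n.
move=> k kn; rewrite /bK; destruct (excluded_middle_informative _) as [[m km]|e2]; last by rewrite mul0r.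
rewrite /= mul1r km F5 //; apply: contraNneq kn => ->; by rewrite km.
Qed.

Lemma contra_fin : False.
Proof.
set beta := phiS he bK.
set P := supp (mu beta).
have inP n : jj n \in P.
  apply: coord_supp; rewrite coord_mu phiSE F7; exact: pickkP.
have U : uniq (map jj (iota 0 (size P).+1)).
  by rewrite (map_inj_uniq jj_inj) iota_uniq.
have Sb : {subset map jj (iota 0 (size P).+1) <= P}.
  by move=> x /mapP [n _ ->]; exact: inP.
have := uniq_leq_size U Sb.
by rewrite size_map size_iota ltnn.
Qed.

End Contra.

Lemma finJ : exists J : seq I, uniq J /\ forall j, j \notin J -> rr j = 0.
Proof.
apply: NNPP => H; apply: contra_fin => S; apply: NNPP => H'.
apply: H; exists (undup S); split; first exact: undup_uniq.
move=> j; rewrite mem_undup => jS; apply/eqP; apply: NNPP => rj.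
by apply: H'; exists j; split => //; apply/negP.
Qed.


Lemma sclZ (f : {scalar V}) a v : f (a *: v) = a * f v.
Proof. by rewrite linearZ. Qed.

Lemma coord_sum (T : Type) (s : seq T) (c : T -> K) (w : T -> V) k :
  coord k (\sum_(t <- s) c t *: w t) = \sum_(t <- s) c t * coord k (w t).
Proof.
rewrite -cfE linear_sum; apply: eq_bigr => t _; by rewrite sclZ cfE.
Qed.

Lemma sum_delta (s : seq I) (us : uniq s) (x : 'I_(size s) -> K) t :
  \sum_t' (tnth (in_tuple s) t == tnth (in_tuple s) t')%:R * x t' = x t.
Proof.
rewrite (bigD1 t) //= eqxx mul1r big1 ?addr0 // => t' t't.
case: eqP => [E|]; last by rewrite mul0r.
have /tuple_uniqP inj : uniq (in_tuple s) by [].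
by move: t't; rewrite (inj _ _ E) eqxx.
Qed.

Lemma indep_tuple (s : seq I) (us : uniq s) (c : 'I_(size s) -> K) :
  \sum_l c l *: e (tnth (in_tuple s) l) = 0 -> forall l, c l = 0.
Proof.
move=> H l; have := congr1 (coord (tnth (in_tuple s) l)) H.
rewrite coord_sum coord0; under eq_bigr do rewrite coord_e mulrC.
by rewrite sum_delta.
Qed.

Lemma has_dim_ext (P Q : V -> Prop) n : (forall v, P v <-> Q v) -> has_dim P n -> has_dim Q n.
Proof.
move=> PQ [b [Pb [lb sb]]]; exists b; split; last split => //.
- by move=> i; apply/PQ.
- by move=> v /PQ; apply: sb.
Qed.

Lemma final : exists n, has_dim (img mu) n /\ has_dim (img nu) n.
Proof.
case: finJ => J [uJ HJ].
have muF : forall beta : {scalar V}, mu beta = \sum_(j <- J) beta (rr j) *: e j.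
  move=> beta; apply: (coord_ext (he:=he)) => k; rewrite coord_mu coord_sum.
  under eq_bigr do rewrite coord_e.
  case: (boolP (k \in J)) => kJ.
    rewrite (@sum_one _ _ _ k) ?eqxx ?mulr1 //.
    by move=> j jk; rewrite eq_sym (negbTE jk) mulr0.
  rewrite big1_seq; first by rewrite HJ // linear0.
  by move=> j [] /andP [_ jJ]; case: eqP => [kj|]; [rewrite kj jJ in kJ | rewrite mulr0].
have nuF : forall alpha : {scalar V}, nu alpha = \sum_(j <- J) alpha (e j) *: rr j.
  move=> alpha; apply: (coord_ext (he:=he)) => k; rewrite coord_sum -cfE -hpair.
  have ccE : cc k = \sum_(j <- J) coord j (cc k) *: e j.
    apply: vec_sum => // j; rewrite -coord_rr; apply: contraR => jJ.
    by rewrite HJ // coord0.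
  rewrite -/(cc k) {1}ccE linear_sum; apply: eq_bigr => j _.
  by rewrite sclZ coord_rr mulrC.
set n := size J; set Jt := in_tuple J.
set L := undup (flatten [seq supp (rr j) | j <- J]); set Lt := in_tuple L.
have uL : uniq L by rewrite undup_uniq.
set G := \matrix_(t < n, l < size L) coord (tnth Lt l) (rr (tnth Jt t)).
have rrF : forall t, rr (tnth Jt t) = \sum_l G t l *: e (tnth Lt l).
  move=> t; under eq_bigr do rewrite mxE.
  rewrite -(big_tuple _ _ Lt predT (fun k => coord k (rr (tnth Jt t)) *: e k)).
  apply: vec_sum => // k /coord_supp ks; rewrite mem_undup; apply/flatten_mapP.
  by exists (tnth Jt t) => //; apply: mem_tnth.
have nu_mx : forall alpha : {scalar V},
    nu alpha = \sum_l ((\row_t alpha (e (tnth Jt t))) *m G) 0 l *: e (tnth Lt l).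
  move=> alpha; rewrite nuF -mx_comb (big_tuple _ _ Jt predT (fun j => alpha (e j) *: rr j)).
  by apply: eq_bigr => t _; rewrite rrF mxE.
have mu_mx : forall beta : {scalar V},
    mu beta = \sum_t ((\row_l beta (e (tnth Lt l))) *m G^T) 0 t *: e (tnth Jt t).
  move=> beta; rewrite muF (big_tuple _ _ Jt predT (fun j => beta (rr j) *: e j)).
  apply: eq_bigr => t _; congr (_ *: _); rewrite rrF linear_sum mxE.
  by apply: eq_bigr => l _; rewrite sclZ !mxE mulrC.
exists (\rank G); split.
- rewrite -mxrank_tr.
  apply: has_dim_ext (@has_dim_mx K V _ _ G^T (fun t => e (tnth Jt t)) _); last first.
    by move=> c /indep_tuple; apply.
  move=> v; split.
    case=> y ->; exists (phiS he (fun k => \sum_l (k == tnth Lt l)%:R * y 0 l)).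
    rewrite mu_mx; apply: eq_bigr => t _; congr (_ *: _); congr ((_ *m _) 0 t).
    by apply/matrixP => a l; rewrite ord1 mxE phiSE phi_e sum_delta.
  by case=> beta <-; exists (\row_l beta (e (tnth Lt l))); apply: mu_mx.
- apply: has_dim_ext (@has_dim_mx K V _ _ G (fun l => e (tnth Lt l)) _); last first.
    by move=> c /indep_tuple; apply.
  move=> v; split.
    case=> x ->; exists (phiS he (fun k => \sum_t (k == tnth Jt t)%:R * x 0 t)).
    rewrite nu_mx; apply: eq_bigr => l _; congr (_ *: _); congr ((_ *m _) 0 l).
    by apply/matrixP => a t; rewrite ord1 mxE phiSE phi_e sum_delta.
  by case=> alpha <-; exists (\row_t alpha (e (tnth Jt t))); apply: nu_mx.
Qed.

End Main.

Theorem lemmaA1 (R : realType) (A : lmodType R[i])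
  (hA : countable_dim A)
  (mu nu : algdual A -> A)
  (hmu : dual_linear mu) (hnu : dual_linear nu)
  (hpair : forall alpha beta : algdual A, alpha (mu beta) = beta (nu alpha)) :
  exists n : nat, has_dim (img mu) n /\ has_dim (img nu) n.
Proof.
case: hA => I [e he].
exact: (@final _ A I e he mu nu hpair).
Qed.
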